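(* Any unsound deterministic negotiation contains an anti-pattern (of type $\mathcal{B}$, $\mathcal{F}$ or $\mathcal{C}$).
   Context: A negotiation is a tuple $\mathcal{N}=(\mathit{Proc},N,\mathit{dom},R,\delta)$ where $\mathit{Proc}$ is a finite set of processes, $N$ is a finite set of nodes, $\mathit{dom}:N\to 2^{\mathit{Proc}}\setminus\{\emptyset\}$, there are two distinguished nodes $n_{\mathit{init}},n_{\mathit{fin}}$ with $\mathit{dom}(n_{\mathit{init}})=\mathit{dom}(n_{\mathit{fin}})=\mathit{Proc}$, $R$ is a set of results, each node $n$ has a set $\mathit{out}(n)\subseteq R$ of results (nonempty for $n\neq n_{\mathit{fin}}$), and $\delta(n,a,p)\subseteq N$ is defined and nonempty exactly when $a\in\mathit{out}(n)$ and $p\in\mathit{dom}(n)$, with $p\in\mathit{dom}(n')$ for all $n'\in\delta(n,a,p)$. $\mathcal{N}$ is deterministic if every $\delta(n,a,p)$ is a singleton, identified with its element. A configuration is a map $C$ assigning to each process a nonempty set of nodes; $C_{\mathit{init}}(p)=\{n_{\mathit{init}}\}$, $C_{\mathit{fin}}(p)=\{n_{\mathit{fin}}\}$. A node $n$ is enabled in $C$ if $n\in C(p)$ for all $p\in\mathit{dom}(n)$. If $n$ is enabled and $a\in\mathit{out}(n)$ then $C\xrightarrow{(n,a)}C'$ with $C'(p)=\delta(n,a,p)$ for $p\in\mathit{dom}(n)$, $C'(p)=C(p)$ otherwise. Runs are sequences of such steps; $\mathcal{N}$ is sound if every finite run from $C_{\mathit{init}}$ can be extended to a finite run ending in $C_{\mathit{fin}}$.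 The graph of $\mathcal{N}$ has vertex set $N$ and edges $n\xrightarrow{p,a}n'$ whenever $n'\in\delta(n,a,p)$; a local path is a path in this graph; a $p$-path is a local path all of whose edges are labelled by process $p$; a local circuit is a local path with at least one edge whose first and last nodes coincide. A node $n$ of a local path $\pi$ dominates $\pi$ if $\mathit{dom}(m)\subseteq\mathit{dom}(n)$ for every node $m$ of $\pi$. A tuple $(p_1,p_2,n_1,n_2)\in\mathit{Proc}^2\times N^2$ is a fork of a deterministic $\mathcal{N}$ if there is a local path from $n_{\mathit{init}}$ to a node $n$ and a result $a\in\mathit{out}(n)$ such that $p_i\in\mathit{dom}(n)\cap\mathit{dom}(n_i)$ for $i=1,2$, and for $i=1,2$ there is a $p_i$-path $\pi_i$ from $\delta(n,a,p_i)$ to $n_i$, with $\pi_1,\pi_2$ having no node in common. Anti-patterns: type $\mathcal{B}$: a $p$-path from $n_{\mathit{init}}$ to a node $n$ such that no $p$-path leads from $n$ to $n_{\mathit{fin}}$; type $\mathcal{F}$: a fork $(p_1,p_2,n_1,n_2)$ with $p_2\in\mathit{dom}(n_1)$ and $p_1\in\mathit{dom}(n_2)$; type $\mathcal{C}$: a local circuit without a dominating node. *)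

(* Defs.v *)
From Stdlib Require Import Relations.
From mathcomp Require Import all_boot.
Set Implicit Arguments. Unset Strict Implicit. Unset Printing Implicit Defensive.

Record negotiation := Negotiation {
  Proc : finType;
  Node : finType;
  Res : finType;
  dom : Node -> {set Proc};
  ninit : Node;
  nfin : Node;
  out : Node -> {set Res};
  delta : Node -> Res -> Proc -> {set Node};
  dom_nonempty : forall n, dom n != set0;
  ninit_nfin : ninit != nfin;
  dom_ninit : dom ninit = [set: Proc];
  dom_nfin : dom nfin = [set: Proc];
  out_nonempty : forall n, n != nfin -> out n != set0;
  (* delta n a p is defined and nonempty exactly when a in out n and p in dom n;
     elsewhere it is (by convention) empty *)
  delta_nonempty : forall n a p,
    (delta n a p != set0) = (a \in out n) && (p \in dom n);
  delta_dom : forall n a p n', n' \in delta n a p -> p \in dom n'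
}.

Section Defs.
Variable N : negotiation.

Definition deterministic : Prop :=
  forall (n : Node N) (a : Res N) (p : Proc N), a \in out n -> p \in dom n ->
    exists m, delta n a p = [set m].

Definition config := {ffun Proc N -> {set Node N}}.

Definition Cinit : config := [ffun _ => [set ninit N]].
Definition Cfin : config := [ffun _ => [set nfin N]].

Definition enabled (C : config) (n : Node N) : bool :=
  [forall p in dom n, n \in C p].

Definition step (C C' : config) : Prop :=
  exists (n : Node N) (a : Res N), enabled C n /\ a \in out n /\
    C' = [ffun p => if p \in dom n then delta n a p else C p].

Definition reachable : config -> config -> Prop := clos_refl_trans config step.

Definition sound : Prop :=
  forall C, reachable Cinit C -> reachable C Cfin.

Definition ledge : rel (Node N) :=
  fun n n' => [exists p : Proc N, exists a : Res N, n' \in delta n a p].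
Definition pedge (p : Proc N) : rel (Node N) :=
  fun n n' => [exists a : Res N, n' \in delta n a p].

(* a local path is given by its first node x and the list s of the
   following nodes; its nodes are x :: s and its last node is last x s *)
Definition local_path_from_to (x y : Node N) : Prop :=
  exists s, path ledge x s /\ last x s = y.
Definition p_path_from_to (p : Proc N) (x y : Node N) : Prop :=
  exists s, path (pedge p) x s /\ last x s = y.

Definition fork (p1 p2 : Proc N) (n1 n2 : Node N) : Prop :=
  exists (n : Node N) (a : Res N), local_path_from_to (ninit N) n /\ a \in out n /\
    p1 \in dom n :&: dom n1 /\ p2 \in dom n :&: dom n2 /\
    exists m1 m2 s1 s2,
      delta n a p1 = [set m1] /\ delta n a p2 = [set m2] /\
      path (pedge p1) m1 s1 /\ last m1 s1 = n1 /\
      path (pedge p2) m2 s2 /\ last m2 s2 = n2 /\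
      [disjoint (m1 :: s1) & (m2 :: s2)].

Definition antipattern_B : Prop :=
  exists (p : Proc N) (n : Node N), p_path_from_to p (ninit N) n /\ ~ p_path_from_to p n (nfin N).

Definition antipattern_F : Prop :=
  exists (p1 p2 : Proc N) (n1 n2 : Node N), fork p1 p2 n1 n2 /\ p2 \in dom n1 /\ p1 \in dom n2.

Definition dominates (n : Node N) (nodes : seq (Node N)) : bool :=
  all (fun m => dom m \subset dom n) nodes.

Definition antipattern_C : Prop :=
  exists (x : Node N) (s : seq (Node N)), s != [::] /\ path ledge x s /\ last x s = x /\
    ~~ has (fun n => dominates n (x :: s)) (x :: s).

End Defs.

(* Main.v *)
Require Import Defs.
From mathcomp Require Import all_boot.
From Stdlib Require Import Relations Classical ClassicalEpsilon.
Set Implicit Arguments. Unset Strict Implicit. Unset Printing Implicit Defensive.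

Section S.
Variable N : negotiation.
Hypothesis Ndet : deterministic N.

Lemma pedge_dom (p : Proc N) (x y : Node N) : pedge p x y -> p \in dom y.
Proof. by case/existsP=> a /delta_dom. Qed.

Lemma pedge_out (p : Proc N) (x y : Node N) : pedge p x y -> exists2 a, a \in out x & y \in delta x a p.
Proof.
case/existsP=> a Hy; exists a => //.
have : delta x a p != set0 by apply/set0Pn; exists y.
by rewrite delta_nonempty => /andP[].
Qed.

Lemma pedge_dom_src (p : Proc N) (x y : Node N) : pedge p x y -> p \in dom x.
Proof.
case/existsP=> a Hy.
have : delta x a p != set0 by apply/set0Pn; exists y.
by rewrite delta_nonempty => /andP[].
Qed.

Lemma ppath_dom (p : Proc N) (x : Node N) s : path (pedge p) x s -> p \in dom x ->
  forall m, m \in x :: s -> p \in dom m.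
Proof.
elim: s x => [|y s IH] x /=; first by move=> _ H m; rewrite inE => /eqP->.
case/andP=> Hxy Hp Hx m; rewrite inE => /orP[/eqP->//|].
by apply: IH => //; apply: pedge_dom Hxy.
Qed.

Lemma ppath_last_dom (p : Proc N) (x : Node N) s : path (pedge p) x s -> p \in dom x -> p \in dom (last x s).
Proof. by move=> H1 H2; apply: (ppath_dom H1 H2); apply: mem_last. Qed.

Lemma pedge_ledge (p : Proc N) : subrel (pedge p) (@ledge N).
Proof. by move=> x y /existsP[a H]; apply/existsP; exists p; apply/existsP; exists a. Qed.

Lemma ppath_lpath (p : Proc N) (x : Node N) s : path (pedge p) x s -> path (@ledge N) x s.
Proof. by apply: sub_path; apply: pedge_ledge. Qed.

Lemma dom_init (p : Proc N) : p \in dom (ninit N).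
Proof. by rewrite dom_ninit inE. Qed.

Lemma dom_fin (p : Proc N) : p \in dom (nfin N).
Proof. by rewrite dom_nfin inE. Qed.

Definition Pair (p q : Proc N) (kp kq : Node N) :=
  exists n a m1 m2 s1 s2, local_path_from_to (ninit N) n /\ a \in out n /\
    p \in dom n /\ q \in dom n /\ delta n a p = [set m1] /\ delta n a q = [set m2] /\
    path (pedge p) m1 s1 /\ last m1 s1 = kp /\ path (pedge q) m2 s2 /\ last m2 s2 = kq /\
    (forall j, j \in belast m1 s1 -> q \notin dom j) /\
    (forall j, j \in belast m2 s2 -> p \notin dom j).

Lemma Pair_sym (p q : Proc N) (kp kq : Node N) : Pair p q kp kq -> Pair q p kq kp.
Proof.
case=> [n [a [m1 [m2 [s1 [s2 [H1 [H2 [H3 [H4 [H5 [H6 [H7 [H8 [H9 [H10 [H11 H12]]]]]]]]]]]]]]]]].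
by exists n, a, m2, m1, s2, s1.
Qed.

Definition Inv (E : config N) :=
  (forall p, exists k, E p = [set k] /\ p_path_from_to p (ninit N) k) /\
  (forall p q kp kq, E p = [set kp] -> E q = [set kq] -> kp != kq -> Pair p q kp kq).

Lemma Inv_init : Inv (Cinit N).
Proof.
split=> [p|p q kp kq]; first by exists (ninit N); rewrite ffunE; split=> //; exists [::].
by rewrite !ffunE => /set1_inj <- /set1_inj <-; rewrite eqxx.
Qed.

Lemma Inv_pos E (p : Proc N) (k : Node N) : Inv E -> E p = [set k] -> p_path_from_to p (ninit N) k.
Proof.
case=> [H _] Hk; case: (H p) => k' [Hk' Hp]; move: Hk; rewrite Hk' => /set1_inj <-//.
Qed.

Lemma Inv_dom E (p : Proc N) (k : Node N) : Inv E -> E p = [set k] -> p \in dom k.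
Proof.
move=> HI Hk; case: (Inv_pos HI Hk) => s [Hs <-].
by apply: ppath_last_dom Hs (dom_init p).
Qed.

Lemma Inv_step E E' : Inv E -> step E E' -> Inv E'.
Proof.
move=> HI [n [a [Hen [Ha ->]]]].
have Hpos : forall p, p \in dom n -> E p = [set n].
  move=> p Hp; case: HI => [H _]; case: (H p) => k [Hk _].
  by move/forallP: Hen => /(_ p); rewrite Hp Hk inE /= => /eqP->.
have Hdet : forall p, p \in dom n -> exists m, delta n a p = [set m] by move=> p Hp; apply: Ndet.
split.
  move=> p; rewrite ffunE; case: ifP => Hp; last by case: HI => [H _]; apply: H.
  case: (Hdet p Hp) => m Hm; exists m; split=> //.
  case: (Inv_pos HI (Hpos p Hp)) => s [Hs Hl]; exists (rcons s m).
  rewrite rcons_path last_rcons Hs Hl /=; split=> //.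
  by apply/existsP; exists a; rewrite Hm inE.
have key : forall p q kp kq, p \in dom n -> q \notin dom n ->
   E q = [set kq] -> delta n a p = [set kp] -> Pair p q kp kq.
  move=> p q kp kq Hp Hq Hkq Hkp.
  have Hnq : n != kq by apply/eqP=> Ee; move: Hq; rewrite Ee (Inv_dom HI Hkq).
  case: HI => [_ H]; move: (H p q n kq (Hpos p Hp) Hkq Hnq).
  move=> [n0 [a0 [m1 [m2 [s1 [s2 [H1 [H2 [H3 [H4 [H5 [H6 [H7 [H8 [H9 [H10 [H11 H12]]]]]]]]]]]]]]]]].
  exists n0, a0, m1, m2, (rcons s1 kp), s2; do 6 (split; first done).
  split. rewrite rcons_path H7 H8 /=; apply/existsP; exists a; rewrite Hkp inE //.
  split; first by rewrite last_rcons.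
  do 2 (split; first done); split; last done.
  move=> j; rewrite belast_rcons lastI mem_rcons inE H8 => /orP[/eqP->//|]; exact: H11.
move=> p q kp kq; rewrite !ffunE.
case: ifP => Hp; case: ifP => Hq.
- move=> E1 E2 Hne; exists n, a, kp, kq, [::], [::].
  case: (Inv_pos HI (Hpos p Hp)) => s [Hs Hl].
  do 12 (try split) => //; by exists s; split=> //; apply: ppath_lpath Hs.
- by move=> E1 E2 _; apply: key => //; rewrite Hq.
- by move=> E1 E2 _; apply: Pair_sym; apply: key => //; rewrite Hp.
- by case: HI => [_ H]; apply: H.
Qed.

Lemma Inv_reach E E' : reachable E E' -> Inv E -> Inv E'.
Proof.
elim=> [x y Hs|x|x y z _ IH1 _ IH2] H //; first exact: Inv_step H Hs.
by apply: IH2; apply: IH1.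
Qed.


Notation reach := (@reachable N).
Definition reachb (E E' : config N) : bool :=
  if excluded_middle_informative (reach E E') then true else false.

Lemma reachbP E E' : reflect (reach E E') (reachb E E').
Proof. by rewrite /reachb; case: excluded_middle_informative => H; constructor. Qed.

Lemma reach_trans (x y z : config N) : reach x y -> reach y z -> reach x z.
Proof. exact: rt_trans. Qed.

Lemma terminal C : exists D, reach C D /\ forall E, reach D E -> reach E D.
Proof.
suff H : forall n C, #|[set E | reachb C E]| <= n ->
   exists D, reach C D /\ forall E, reach D E -> reach E D by exact: H.
elim=> [|n IH] {}C Hn.
  move: Hn; rewrite leqn0 cards_eq0 => /eqP H0.
  have : C \in [set E | reachb C E] by rewrite inE; apply/reachbP; apply: rt_refl.
  by rewrite H0 inE.
case: (classic (forall E, reach C E -> reach E C)) => Hc.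
  by exists C; split=> //; apply: rt_refl.
have [E [HCE HEC]] : exists E, reach C E /\ ~ reach E C.
  apply: NNPP => Hn'; apply: Hc => E HE; apply: NNPP => HEC; apply: Hn'; by exists E.
have Hsub : [set F | reachb E F] \proper [set F | reachb C F].
  apply/properP; split.
    apply/subsetP=> F; rewrite !inE => /reachbP HF; apply/reachbP; exact: reach_trans HCE HF.
  exists C; rewrite !inE; first by apply/reachbP; apply: rt_refl.
  by apply/reachbP.
have := proper_card Hsub => Hlt.
case: (IH E); first by rewrite -ltnS; apply: leq_trans Hlt Hn.
by move=> D [HED HD]; exists D; split=> //; apply: reach_trans HED.
Qed.


Lemma first_move (X Y : config N) p x : reach X Y -> X p = [set x] -> Y p != [set x] ->
  exists Z, reach X Z /\ enabled Z x.
Proof.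
move=> HXY; have := clos_rt_rt1n _ _ _ _ HXY; clear HXY.
elim=> [X0 -> |X0 X1 Y0 Hst _ IH]; first by rewrite eqxx.
move=> HX HY; move: Hst => [n [a [Hen [Ha HX1]]]].
have [Hp|Hp] := boolP (p \in dom n).
  exists X0; split; first exact: rt_refl.
  move/forallP: (Hen) => /(_ p); rewrite Hp HX inE /= => /eqP Ee; by rewrite -Ee.
have HX1p : X1 p = [set x] by rewrite HX1 ffunE (negbTE Hp).
case: (IH HX1p HY) => Z [HZ HZe]; exists Z; split=> //.
apply: reach_trans HZ; apply: rt_step; by exists n, a.
Qed.

Lemma Inv_enabled E (p : Proc N) k : Inv E -> enabled E k -> p \in dom k -> E p = [set k].
Proof.
case=> [H _] /forallP He Hp; case: (H p) => kp [Hkp _].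
by move: (He p); rewrite Hp Hkp inE /= => /eqP->.
Qed.

Hypothesis NB : forall p k, p_path_from_to p (ninit N) k -> p_path_from_to p k (nfin N).

Lemma deadlock C : reach (Cinit N) C -> ~ reach C (Cfin N) ->
  exists D, reach (Cinit N) D /\ forall n, ~~ enabled D n.
Proof.
move=> HC HCf; case: (terminal C) => D [HCD HD].
have HID : Inv D by apply: Inv_reach (Inv_init); apply: reach_trans HC HCD.
exists D; split; first exact: reach_trans HC HCD.
move=> n; apply/negP => Hen.
case/set0Pn: (dom_nonempty n) => p Hp.
pose Good k := exists E, reach D E /\ enabled E k /\ p \in dom k.
have Hstep : forall k k', Good k -> pedge p k k' -> Good k'.
  move=> k k' [E [HDE [HEk Hpk]]] Hkk'.
  have HIE : Inv E by apply: Inv_reach HID.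
  case: (pedge_out Hkk') => a Ha Hk'.
  pose E' : config N := [ffun r => if r \in dom k then delta k a r else E r].
  have HEE' : reach E E' by apply: rt_step; exists k, a.
  case: (Ndet Ha Hpk) => m Hm.
  have Hmk : m = k' by move: Hk'; rewrite Hm inE => /eqP->.
  have HE'p : E' p = [set k'] by rewrite ffunE Hpk Hm Hmk.
  have HE'E : reach E' E by apply: reach_trans (HD _ (reach_trans HDE HEE')) HDE.
  have HEp : E p = [set k] by apply: Inv_enabled.
  case: (eqVneq k k') => [<-|Hne]; first by exists E.
  case: (first_move HE'E HE'p); first by rewrite HEp; apply/eqP => /set1_inj Ee; move: Hne; rewrite Ee eqxx.
  move=> Z [HZ HZe]; exists Z; split; last split=> //; last exact: pedge_dom Hkk'.
  exact: reach_trans (reach_trans HDE HEE') HZ.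
have Hpath : forall s k, path (pedge p) k s -> Good k -> Good (last k s).
  elim=> [|y s IH] k //= /andP[H1 H2] Hk; apply: IH H2 _; exact: Hstep Hk H1.
have HDp : D p = [set n] by apply: Inv_enabled.
case: (NB (Inv_pos HID HDp)) => s [Hs Hl].
have : Good (last n s) by apply: Hpath Hs _; exists D; split=> //; apply: rt_refl.
rewrite Hl => -[E [HDE [HEf _]]].
have HIE : Inv E by apply: Inv_reach HID.
have HEC : E = Cfin N.
  apply/ffunP=> r; rewrite ffunE; apply: Inv_enabled => //; exact: dom_fin.
by apply: HCf; rewrite -HEC; apply: reach_trans HCD HDE.
Qed.


Lemma first_prefix (T : eqType) (e : rel T) (P : pred T) x t :
  path e x t -> P (last x t) ->
  exists u, path e x u /\ P (last x u) /\ (forall m, m \in belast x u -> ~~ P m).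
Proof.
elim: t x => [|y t IH] x /=; first by move=> _ Hx; exists [::].
case/andP=> Hxy Ht Hl.
have [Px|nPx] := boolP (P x); first by exists [::].
case: (IH y Ht Hl) => u [Hu [HPu Hb]].
exists (y :: u); rewrite /= Hxy Hu; split=> //; split=> // m.
by rewrite inE => /orP[/eqP->//|]; apply: Hb.
Qed.

Lemma fork_of p q kp kq k u : Pair p q kp kq -> kp != kq -> q \in dom kp ->
  path (pedge q) kq u -> last kq u = k -> p \in dom k ->
  (forall m, m \in belast kq u -> p \notin dom m) -> k != kp -> antipattern_F N.
Proof.
case=> n [a [m1 [m2 [s1 [s2 [H1 [H2 [H3 [H4 [H5 [H6 [H7 [H8 [H9 [H10 [H11 H12]]]]]]]]]]]]]]]].
move=> Hne Hq Hu Hk Hpk Hb Hkne.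
have Hpm1 : p \in dom m1 by apply: (delta_dom (n:=n) (a:=a)); rewrite H5 inE.
have Hqm2 : q \in dom m2 by apply: (delta_dom (n:=n) (a:=a)); rewrite H6 inE.
have Hpall := ppath_dom H7 Hpm1.
have Hcat : path (pedge q) m2 (s2 ++ u) by rewrite cat_path H9 H10 Hu.
have Hqall := ppath_dom Hcat Hqm2.
have Hpkp : p \in dom kp by rewrite -H8; apply: ppath_last_dom H7 Hpm1.
have Hqk : q \in dom k.
  rewrite -Hk; apply: (ppath_last_dom Hu); rewrite -H10; exact: (ppath_last_dom H9 Hqm2).
exists p, q, kp, k; split; last by split.
exists n, a; split=> //; split=> //.
split; first by rewrite inE H3 Hpkp.
split; first by rewrite inE H4 Hqk.
exists m1, m2, s1, (s2 ++ u); do 5 (split=> //).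
split; first by rewrite last_cat H10.
rewrite disjoint_has; apply/hasPn => j Hj1; apply/negP => Hj2.
move: Hj1; rewrite lastI mem_rcons inE H8 => /orP[/eqP Ej|Hj1]; last first.
  by move: (H11 j Hj1); rewrite (Hqall j Hj2).
subst j; move: Hj2.
have -> : m2 :: s2 ++ u = belast m2 s2 ++ rcons (belast kq u) k.
  by rewrite -Hk -lastI -H10 -cat_rcons -lastI.
rewrite mem_cat mem_rcons inE => /orP[Hb2|/orP[/eqP Ek|Hb3]].
- by move: (H12 kp Hb2); rewrite Hpkp.
- by move: Hkne; rewrite Ek eqxx.
- by move: (Hb kp Hb3); rewrite Hpkp.
Qed.


Lemma seg_of D p q kp kq : Inv D -> D p = [set kp] -> D q = [set kq] -> kp != kq ->
  q \in dom kp -> ~ antipattern_F N ->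
  exists u, path (@ledge N) kq u /\ last kq u = kp /\
    (forall m, m \in kq :: u -> p \in dom m -> m = kp).
Proof.
move=> HI Hp Hq Hne Hqkp HnF.
have HPq : Pair p q kp kq by case: HI => [_ H]; apply: H.
case: (NB (Inv_pos HI Hq)) => t [Ht Hl].
have := @first_prefix _ (pedge q) (fun m => p \in dom m) kq t Ht.
rewrite Hl => /(_ (dom_fin p)) [u [Hu [HPu Hb]]].
have [Ek|Nk] := eqVneq (last kq u) kp; last first.
  by exfalso; apply: HnF; apply: (fork_of HPq Hne Hqkp Hu erefl HPu Hb Nk).
exists u; split; first exact: ppath_lpath Hu.
split=> // m; rewrite lastI mem_rcons inE Ek => /orP[/eqP->//|Hm] Hpm.
by move: (Hb m Hm); rewrite Hpm.
Qed.

End S.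

Lemma iter_pigeon (T : finType) (f : T -> T) x :
  exists i j, i < j /\ iter i f x = iter j f x.
Proof.
pose s := [seq iter i f x | i <- iota 0 #|T|.+1].
have : ~~ uniq s.
  apply/negP => /card_uniqP Hu.
  by move: (max_card (mem s)); rewrite Hu size_map size_iota ltnn.
case/(uniqPn x) => i [j [Hij Hj Ee]].
exists i, j; split=> //.
move: Hj Ee; rewrite /s size_map size_iota => Hj.
rewrite !(nth_map 0) ?size_iota //; last exact: ltn_trans Hij Hj.
by rewrite !nth_iota //; exact: ltn_trans Hij Hj.
Qed.

Lemma cycle_C (N : negotiation) (d : Proc N -> Node N) (w : Proc N -> Proc N) (x0 : Proc N) :
  (forall p, p \in dom (d p)) -> (forall p, d (w p) != d p) ->
  (forall p, exists u, path (@ledge N) (d (w p)) u /\ last (d (w p)) u = d p /\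
       forall m, m \in d (w p) :: u -> p \in dom m -> m = d p) ->
  antipattern_C N.
Proof.
move=> H0 Hne H4.
have H3 : forall p, p \notin dom (d (w p)).
  move=> p; apply/negP => Hp; case: (H4 p) => u [_ [_ Hm]].
  by move: (Hne p); rewrite (Hm _ (mem_head _ _) Hp) eqxx.
case: (iter_pigeon w x0) => i [j [Hij Eij]].
set q := iter i w x0; set n := j - i.
have Hn : 0 < n by rewrite subn_gt0.
have Hq : iter n w q = q by rewrite /q -iterD subnK ?(ltnW Hij) // Eij.
have Hbuild : forall l, exists s, path (@ledge N) (d (iter l w q)) s /\
    last (d (iter l w q)) s = d q /\ (0 < l -> s != [::]) /\
    (forall m, m \in s -> exists2 i0, i0 < l & (iter i0 w q \in dom m -> m = d (iter i0 w q))) /\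
    (forall i0, i0 <= l -> d (iter i0 w q) \in d (iter l w q) :: s).
  elim=> [|l [s [Hs [Hl [Hne' [Hm Hmem]]]]]].
    exists [::]; split=> //; split=> //; split=> //; split=> // i0.
    by rewrite leqn0 => /eqP-> /=; rewrite inE.
  set p := iter l w q.
  case: (H4 p) => u [Hu [Hul Hum]].
  exists (u ++ s); rewrite iterS -/p.
  split; first by rewrite cat_path Hu Hul Hs.
  split; first by rewrite last_cat Hul.
  split.
    move=> _; case: u Hu Hul Hum => [|y u] //= _ Ee _.
    by move: (Hne p); rewrite Ee eqxx.
  split.
    move=> m; rewrite mem_cat => /orP[Hmu|Hms].
      by exists l => //; apply: Hum; rewrite inE Hmu orbT.
    by case: (Hm m Hms) => i' Hi' Hi''; exists i' => //; apply: ltnW.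
  move=> i'; rewrite leq_eqVlt => /orP[/eqP->|Hi']; first by rewrite iterS mem_head.
  move: (Hmem i' Hi'); rewrite inE => /orP[/eqP->|Hs'].
    by rewrite -Hul -cat_cons mem_cat mem_last.
  by rewrite inE mem_cat Hs' !orbT.
case: (Hbuild n) => s [Hs [Hl [Hsn [Hm Hmem]]]].
rewrite Hq in Hs Hl Hmem.
have Hs0 : s != [::] by apply: Hsn.
exists (d q), s; split=> //; split=> //; split=> //.
apply/hasPn => m Hm0; apply/negP => Hdom.
have Hms : m \in s.
  move: Hm0; rewrite inE => /orP[/eqP Em|//].
  case: s Hs0 Hl {Hs Hm Hmem Hsn Hdom} => [|y s'] // _ Hl.
  by rewrite Em -Hl /= mem_last.
case: (Hm m Hms) => i' Hi' Hi'm.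
have Hsub : forall k, k <= n -> dom (d (iter k w q)) \subset dom m.
  by move=> k Hk; move/allP: Hdom; apply; apply: Hmem.
have Emd : m = d (iter i' w q).
  apply: Hi'm; move/subsetP: (Hsub i' (ltnW Hi')); apply; exact: H0.
have [j' [Hj' Ej']] : exists j', j' <= n /\ w (iter j' w q) = iter i' w q.
  case: i' Hi' {Hi'm Emd Hsub} => [|i'] Hi'.
    exists n.-1; split; first exact: leq_pred.
    by rewrite -iterS prednK // Hq.
  by exists i'; split; [apply: leq_trans (leqnSn _) (ltnW Hi')|rewrite iterS].
move: (H3 (iter j' w q)); rewrite Ej' -Emd.
by move/subsetP: (Hsub j' Hj') => /(_ _ (H0 _)) ->.
Qed.

Theorem lemma3p10 (N : negotiation) :
  deterministic N -> ~ sound N ->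
  antipattern_B N \/ antipattern_F N \/ antipattern_C N.
Proof.
move=> Ndet Hns.
case: (classic (antipattern_B N)) => HB; first by left.
case: (classic (antipattern_F N)) => HF; first by right; left.
right; right.
have NB : forall p k, p_path_from_to p (ninit N) k -> p_path_from_to p k (nfin N).
  by move=> p k Hk; apply: NNPP => Hn; apply: HB; exists p, k.
have [C [HC HCf]] : exists C, reachable (Cinit N) C /\ ~ reachable C (Cfin N).
  apply: NNPP => H; apply: Hns => C HC; apply: NNPP => HCf; apply: H; by exists C.
case: (deadlock Ndet NB HC HCf) => D [HD Hdl].
have HID : Inv D by apply: (Inv_reach Ndet HD); apply: Inv_init.
pose d p := odflt (ninit N) [pick k | D p == [set k]].
have Hd : forall p, D p = [set d p].
  move=> p; rewrite /d; case: pickP => [k /eqP //|Hn].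
  case: HID => [H _]; case: (H p) => k [Hk _].
  by move: (Hn k); rewrite Hk eqxx.
pose w p := odflt p [pick r | (r \in dom (d p)) && (d r != d p)].
have Hw : forall p, (w p \in dom (d p)) && (d (w p) != d p).
  move=> p; rewrite /w; case: pickP => [r //|Hn].
  move: (Hdl (d p)); rewrite /enabled => /forallPn [r]; rewrite negb_imply => /andP[Hr Hr'].
  move: (Hn r); rewrite Hr /= Hd inE in Hr' *; by rewrite eq_sym Hr'.
have [x0 _] : exists x0 : Proc N, true.
  move: (Hdl (ninit N)); rewrite /enabled => /forallPn [r _]; by exists r.
apply: (@cycle_C N d w x0).
- by move=> p; apply: (Inv_dom HID (Hd p)).
- by move=> p; case/andP: (Hw p).
- move=> p; case/andP: (Hw p) => H1 H2.
  apply: (seg_of NB HID (Hd p) (Hd (w p))) => //; by rewrite eq_sym.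
Qed.
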